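(* Let $S$ be a Hausdorff semitopological semigroup and let $(x_n)$, $(y_n)$ be unbounded sequences in $S$. Let $\mu,\nu\in S^*$ with $\nu\in\mathrm{cl}_{S^{Lmc}}\varepsilon(\{x_n:n\in\mathbb{N}\})$ and $\mu\in\mathrm{cl}_{S^{Lmc}}\varepsilon(\{y_n:n\in\mathbb{N}\})$. Then $$\mu\nu\in\mathrm{cl}_{S^{Lmc}}\varepsilon(\{y_kx_n:k<n,\ k,n\in\mathbb{N}\}).$$
   Context: A Hausdorff semitopological semigroup is a semigroup $S$ with a Hausdorff topology such that all maps $\lambda_s(x)=sx$, $r_s(x)=xs$ are continuous. $\mathcal{CB}(S)$: bounded continuous complex functions with sup norm; $\beta S$ its spectrum with Gelfand topology; $L_sf(x)=f(sx)$, $(T_\mu f)(s)=\mu(L_sf)$; $Lmc(S)=\{f\in\mathcal{CB}(S):T_\mu f\in\mathcal{CB}(S)\ \forall \mu\in\beta S\}$. $S^{Lmc}$ is the spectrum of $Lmc(S)$ with the Gelfand topology and multiplication $\mu\nu=\mu\circ T_\nu$, where $(T_\nu f)(s)=\nu(L_sf)$ for $f\in Lmc(S)$; $\varepsilon:S\to S^{Lmc}$ is evaluation, $\varepsilon(s)(f)=f(s)$. $S^*=S^{Lmc}\setminus\varepsilon(S)$. A set $A\subseteq S$ is unbounded if $\mathrm{cl}_{S^{Lmc}}\varepsilon(A)\cap S^*\neq\emptyset$; a sequence $(x_n)$ is unbounded if $\{x_n:n\in\mathbb{N}\}$ is unbounded. *)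

(* Defs.v *)
From Stdlib Require Import Reals List.
Open Scope R_scope.

Definition Cplx := (R * R)%type.
Definition C0 : Cplx := (0, 0).
Definition C1 : Cplx := (1, 0).
Definition Cadd (z w : Cplx) : Cplx := (fst z + fst w, snd z + snd w).
Definition Csub (z w : Cplx) : Cplx := (fst z - fst w, snd z - snd w).
Definition Cmul (z w : Cplx) : Cplx :=
  (fst z * fst w - snd z * snd w, fst z * snd w + snd z * fst w).
Definition Cnorm (z : Cplx) : R := sqrt (fst z * fst z + snd z * snd z).

Record HSTSemigroup := {
  car :> Type;
  smul : car -> car -> car;
  smul_assoc : forall a b c, smul a (smul b c) = smul (smul a b) c;
  is_open : (car -> Prop) -> Prop;
  open_full : is_open (fun _ => True);
  open_inter : forall U V, is_open U -> is_open V -> is_open (fun x => U x /\ V x);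
  open_union : forall F : (car -> Prop) -> Prop,
      (forall U, F U -> is_open U) -> is_open (fun x => exists U, F U /\ U x);
  hausdorff : forall x y, x <> y ->
      exists U V, is_open U /\ is_open V /\ U x /\ V y /\ (forall z, ~ (U z /\ V z));
  left_cont : forall s U, is_open U -> is_open (fun x => U (smul s x));
  right_cont : forall s U, is_open U -> is_open (fun x => U (smul x s))
}.

Section Defs.
Variable S : HSTSemigroup.

Definition fadd (f g : S -> Cplx) : S -> Cplx := fun x => Cadd (f x) (g x).
Definition fmul (f g : S -> Cplx) : S -> Cplx := fun x => Cmul (f x) (g x).
Definition fscal (c : Cplx) (f : S -> Cplx) : S -> Cplx := fun x => Cmul c (f x).

Definition continuous_fun (f : S -> Cplx) : Prop :=
  forall x eps, 0 < eps -> exists U, is_open S U /\ U x /\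
    forall y, U y -> Cnorm (Csub (f y) (f x)) < eps.

Definition bounded_fun (f : S -> Cplx) : Prop :=
  exists M, forall x, Cnorm (f x) <= M.

Definition CB (f : S -> Cplx) : Prop := continuous_fun f /\ bounded_fun f.

Definition Lshift (s : S) (f : S -> Cplx) : S -> Cplx := fun x => f (smul S s x).

(** Functionals are represented as maps on all functions; only their values on
    the relevant algebra matter. [is_char A mu]: mu is a nonzero multiplicative
    linear functional on the algebra A (an element of its spectrum). *)
Definition is_char (A : (S -> Cplx) -> Prop) (mu : (S -> Cplx) -> Cplx) : Prop :=
  (forall f g, A f -> A g -> mu (fadd f g) = Cadd (mu f) (mu g)) /\
  (forall c f, A f -> mu (fscal c f) = Cmul c (mu f)) /\
  (forall f g, A f -> A g -> mu (fmul f g) = Cmul (mu f) (mu g)) /\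
  (exists f, A f /\ mu f <> C0).

Definition betaS (mu : (S -> Cplx) -> Cplx) : Prop := is_char CB mu.

Definition Tmu (mu : (S -> Cplx) -> Cplx) (f : S -> Cplx) : S -> Cplx :=
  fun s => mu (Lshift s f).

Definition Lmc (f : S -> Cplx) : Prop :=
  CB f /\ forall mu, betaS mu -> CB (Tmu mu f).

Definition SLmc (mu : (S -> Cplx) -> Cplx) : Prop := is_char Lmc mu.
Definition lmc_prod (mu nu : (S -> Cplx) -> Cplx) : (S -> Cplx) -> Cplx :=
  fun f => mu (Tmu nu f).

Definition evalS (s : S) : (S -> Cplx) -> Cplx := fun f => f s.

Definition Sstar (mu : (S -> Cplx) -> Cplx) : Prop :=
  SLmc mu /\ forall s, ~ (forall f, Lmc f -> mu f = evalS s f).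

(** mu lies in the Gelfand (weak-star) closure of epsilon(A): every basic
    weak-star neighbourhood of mu, given by finitely many f in Lmc(S) and
    eps > 0, meets epsilon(A). *)
Definition in_cl_eps (A : S -> Prop) (mu : (S -> Cplx) -> Cplx) : Prop :=
  forall (fs : list (S -> Cplx)) (eps : R), 0 < eps ->
    (forall f, In f fs -> Lmc f) ->
    exists a, A a /\ forall f, In f fs -> Cnorm (Csub (mu f) (evalS a f)) < eps.

Definition unbounded_set (A : S -> Prop) : Prop :=
  exists mu, Sstar mu /\ in_cl_eps A mu.
Definition seq_range (x : nat -> S) : S -> Prop := fun z => exists n, z = x n.
Definition unbounded_seq (x : nat -> S) : Prop := unbounded_set (seq_range x).

End Defs.

(* Main.v *)
Require Import Defs.
From Stdlib Require Import Reals List Lra Lia Classical ClassicalEpsilon FunctionalExtensionality PropExtensionality.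
From Coquelicot Require Complex.
Notation Cmod := Complex.Cmod.
Notation Cplus := Complex.Cplus.
Notation Cmod_ge_0 := Complex.Cmod_ge_0.
Notation Cmod_triangle := Complex.Cmod_triangle.
Notation Cmod_mult := Complex.Cmod_mult.
Notation Cmod_eq_0 := Complex.Cmod_eq_0.
Notation Rmax_Cmod := Complex.Rmax_Cmod.
From mathcomp Require classical_sets filter.
Open Scope R_scope.

Lemma Cnorm_Cmod (z : Cplx) : Cnorm z = Cmod z.
Proof. unfold Cnorm, Cmod. f_equal. simpl. ring. Qed.

Lemma Cnorm_ge0 z : 0 <= Cnorm z.
Proof. rewrite Cnorm_Cmod. apply Cmod_ge_0. Qed.

Lemma Csub_split a b c : Csub a c = Cplus (Csub a b) (Csub b c).
Proof. destruct a, b, c. unfold Csub, Cplus; simpl. f_equal; ring. Qed.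

Lemma Cnorm_tri a b c : Cnorm (Csub a c) <= Cnorm (Csub a b) + Cnorm (Csub b c).
Proof. rewrite !Cnorm_Cmod, (Csub_split a b c). apply Cmod_triangle. Qed.

Lemma Cnorm_add a b : Cnorm (Cadd a b) <= Cnorm a + Cnorm b.
Proof. rewrite !Cnorm_Cmod. apply Cmod_triangle. Qed.

Lemma Cnorm_mul a b : Cnorm (Cmul a b) = Cnorm a * Cnorm b.
Proof. rewrite !Cnorm_Cmod. apply (Cmod_mult a b). Qed.

Lemma Cnorm_sym a b : Cnorm (Csub a b) = Cnorm (Csub b a).
Proof. unfold Cnorm, Csub; simpl. f_equal. ring. Qed.

Lemma Cnorm_zero_eq a b : Cnorm (Csub a b) = 0 -> a = b.
Proof.
  rewrite Cnorm_Cmod. intros H. apply Cmod_eq_0 in H. destruct a, b.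
  unfold Csub in H; simpl in H. injection H; intros. f_equal; lra.
Qed.

Lemma Cnorm_self a : Cnorm (Csub a a) = 0.
Proof. unfold Cnorm, Csub; simpl. replace (_ * _ + _ * _) with 0 by ring. apply sqrt_0. Qed.

Lemma Cnorm_fst z : Rabs (fst z) <= Cnorm z.
Proof. rewrite Cnorm_Cmod. eapply Rle_trans; [|apply Rmax_Cmod]. apply Rmax_l. Qed.
Lemma Cnorm_snd z : Rabs (snd z) <= Cnorm z.
Proof. rewrite Cnorm_Cmod. eapply Rle_trans; [|apply Rmax_Cmod]. apply Rmax_r. Qed.

Lemma Cnorm_le_sum z : Cnorm z <= Rabs (fst z) + Rabs (snd z).
Proof.
  destruct z as [a b]; unfold Cnorm; simpl.
  rewrite <- (sqrt_square (Rabs a + Rabs b)) by (pose proof (Rabs_pos a); pose proof (Rabs_pos b); lra).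
  apply sqrt_le_1_alt.
  destruct (Rcase_abs a) as [Ha|Ha]; [rewrite (Rabs_left a Ha)|rewrite (Rabs_right a Ha)];
  destruct (Rcase_abs b) as [Hb|Hb]; [rewrite (Rabs_left b Hb)|rewrite (Rabs_right b Hb)|rewrite (Rabs_left b Hb)|rewrite (Rabs_right b Hb)]; nra.
Qed.

Lemma Cnorm_real r : Cnorm (r, 0) = Rabs r.
Proof. unfold Cnorm; simpl. replace (r * r + 0 * 0) with (r * r) by ring. apply sqrt_Rsqr_abs. Qed.

Lemma C1_neq_C0 : Defs.C1 <> Defs.C0.
Proof. unfold Defs.C1, Defs.C0. intros H; injection H; lra. Qed.

Lemma Cmul_cancel a b : a <> Defs.C0 -> Cmul a b = a -> b = Defs.C1.
Proof.
  intros Ha H.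
  assert (E : Cmul a (Csub b Defs.C1) = Defs.C0).
  { destruct a, b. unfold Cmul, Csub, Defs.C1, Defs.C0 in *; simpl in *. injection H; intros.
    f_equal; nra. }
  assert (Cnorm a * Cnorm (Csub b Defs.C1) = 0).
  { rewrite <- Cnorm_mul, E. unfold Cnorm, Defs.C0; simpl. replace (0*0+0*0) with 0 by ring. apply sqrt_0. }
  apply Rmult_integral in H0. destruct H0.
  - exfalso. apply Ha. apply Cnorm_zero_eq. destruct a. unfold Csub, Defs.C0; simpl.
    replace (r - 0) with r by ring. replace (r0 - 0) with r0 by ring. exact H0.
  - apply Cnorm_zero_eq; auto.
Qed.

Definition is_ultra {T : Type} (U : (T -> Prop) -> Prop) : Prop :=
  U (fun _ => True) /\
  (forall A B : T -> Prop, U A -> (forall x, A x -> B x) -> U B) /\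
  (forall A B : T -> Prop, U A -> U B -> U (fun x => A x /\ B x)) /\
  ~ U (fun _ => False) /\
  (forall A : T -> Prop, U A \/ U (fun x => ~ A x)).

Definition is_filt {T : Type} (U : (T -> Prop) -> Prop) : Prop :=
  U (fun _ => True) /\
  (forall A B : T -> Prop, U A -> (forall x, A x -> B x) -> U B) /\
  (forall A B : T -> Prop, U A -> U B -> U (fun x => A x /\ B x)).

Lemma ultra_filt {T} (U : (T -> Prop) -> Prop) : is_ultra U -> is_filt U.
Proof. intros (H1 & H2 & H3 & _). repeat split; auto. Qed.

Lemma ultra_ne {T} (U : (T -> Prop) -> Prop) A : is_ultra U -> U A -> exists x, A x.
Proof.
  intros (H1 & H2 & H3 & H4 & H5) HA. apply NNPP. intros N. apply H4.
  apply (H2 A); auto. intros x Ax. apply N. eauto.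
Qed.

Definition genF {T : Type} (P : (T -> Prop) -> Prop) (B : T -> Prop) : Prop :=
  exists l : list (T -> Prop), (forall A, In A l -> P A) /\
    forall x, (forall A, In A l -> A x) -> B x.

Lemma exists_ultra (T : Type) (P : (T -> Prop) -> Prop) :
  (forall l : list (T -> Prop), (forall A, In A l -> P A) ->
     exists x, forall A, In A l -> A x) ->
  exists U, is_ultra U /\ forall A, P A -> U A.
Proof.
  intros HP.
  assert (FF : @filter.Filter T (genF P)).
  { constructor.
    - exists nil. split; [intros A H; destruct H| intros; exact I].
    - intros A B [l1 [H1 H1']] [l2 [H2 H2']]. exists (l1 ++ l2). split.
      + intros C HC. apply in_app_or in HC. destruct HC; auto.
      + intros x Hx. split; [apply H1' | apply H2']; intros C HC; apply Hx; apply in_or_app; auto.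
    - intros A B HAB [l [H1 H2]]. exists l. split; auto. }
  assert (PF : @filter.ProperFilter T (genF P)).
  { constructor; [|exact FF]. intros [l [H1 H2]].
    destruct (HP l H1) as [x Hx]. exact (H2 x Hx). }
  destruct (filter.ultraFilterLemma PF) as [G [GU sub]].
  exists G. split.
  - assert (GF : @filter.Filter T G) by (apply filter.filter_filter).
    assert (GP : @filter.ProperFilter T G) by (apply filter.ultra_proper).
    repeat split.
    + exact (@filter.filterT T G GF).
    + intros A B HA HAB. exact (@filter.filterS T G GF A B HAB HA).
    + intros A B HA HB. exact (@filter.filterI T G GF A B HA HB).
    + exact (@filter.filter_not_empty T G GP).
    + intros A. exact (filter.in_ultra_setVsetC A GU).
  - intros A HA. apply sub. exists (A :: nil). split.
    + intros C [HC|[]]. subst; auto.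
    + intros x Hx. apply Hx. left; auto.
Qed.

Definition islim {T : Type} (U : (T -> Prop) -> Prop) (h : T -> Cplx) (z : Cplx) : Prop :=
  forall d, 0 < d -> U (fun x => Cnorm (Csub (h x) z) < d).

Lemma islim_unique {T} U (h : T -> Cplx) z1 z2 :
  is_ultra U -> islim U h z1 -> islim U h z2 -> z1 = z2.
Proof.
  intros HU H1 H2. apply Cnorm_zero_eq.
  apply Rle_antisym; [|apply Cnorm_ge0].
  apply Rnot_lt_le. intros Hp.
  set (e := Cnorm (Csub z1 z2)) in *.
  destruct HU as (T1 & T2 & T3 & T4 & T5).
  assert (He2 : 0 < e/2) by lra.
  assert (HI := T3 _ _ (H1 (e/2) He2) (H2 (e/2) He2)).
  destruct (ultra_ne U _ (conj T1 (conj T2 (conj T3 (conj T4 T5)))) HI) as [x [Hx1 Hx2]].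
  pose proof (Cnorm_tri z1 (h x) z2). rewrite (Cnorm_sym z1 (h x)) in H. fold e in H. lra.
Qed.

Lemma rlim_exists {T} U (g : T -> R) M :
  is_ultra U -> (forall x, Rabs (g x) <= M) ->
  exists L, forall d, 0 < d -> U (fun x => Rabs (g x - L) < d).
Proof.
  intros HU HM. pose proof HU as (T1 & T2 & T3 & T4 & T5).
  set (E := fun r => U (fun x => r < g x)).
  assert (Eb : bound E).
  { exists M. intros r Er. destruct (ultra_ne U _ HU Er) as [x Hx].
    pose proof (HM x). pose proof (Rle_abs (g x)). lra. }
  assert (Ene : exists r, E r).
  { exists (-M-1). unfold E. apply (T2 _ _ T1). intros x _.
    pose proof (HM x). pose proof (Rle_abs (- g x)). rewrite Rabs_Ropp in H0. lra. }
  destruct (completeness E Eb Ene) as [L [HL1 HL2]].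
  exists L. intros d Hd.
  assert (A1 : U (fun x => L - d < g x)).
  { destruct (classic (U (fun x => L - d < g x))) as [H|H]; auto.
    exfalso. assert (L <= L - d); [|lra]. apply HL2. intros r Er.
    destruct (Rle_dec r (L - d)) as [|Hr]; auto. exfalso. apply H.
    apply (T2 _ _ Er). intros x Hx. lra. }
  assert (A2 : ~ E (L + d/2)).
  { intros Er. pose proof (HL1 _ Er). lra. }
  destruct (T5 (fun x => L + d/2 < g x)) as [H|H]; [contradiction|].
  apply (T2 _ _ (T3 _ _ A1 H)). intros x [Hx1 Hx2].
  apply Rnot_lt_le in Hx2. unfold Rabs. destruct (Rcase_abs (g x - L)); lra.
Qed.

Lemma islim_exists {T} U (h : T -> Cplx) M :
  is_ultra U -> (forall x, Cnorm (h x) <= M) -> exists z, islim U h z.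
Proof.
  intros HU HM. pose proof HU as (T1 & T2 & T3 & T4 & T5).
  destruct (rlim_exists U (fun x => fst (h x)) M HU) as [L1 H1].
  { intros x. eapply Rle_trans; [apply Cnorm_fst|apply HM]. }
  destruct (rlim_exists U (fun x => snd (h x)) M HU) as [L2 H2].
  { intros x. eapply Rle_trans; [apply Cnorm_snd|apply HM]. }
  exists (L1, L2). intros d Hd.
  apply (T2 _ _ (T3 _ _ (H1 (d/2) ltac:(lra)) (H2 (d/2) ltac:(lra)))).
  intros x [Ha Hb]. eapply Rle_lt_trans; [apply Cnorm_le_sum|]. simpl. lra.
Qed.

Definition ulim {T : Type} (U : (T -> Prop) -> Prop) (h : T -> Cplx) : Cplx :=
  epsilon (inhabits Defs.C0) (islim U h).

Lemma ulim_spec {T} U (h : T -> Cplx) M :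
  is_ultra U -> (forall x, Cnorm (h x) <= M) -> islim U h (ulim U h).
Proof. intros HU HM. unfold ulim. apply epsilon_spec. eapply islim_exists; eauto. Qed.

Lemma ulim_eq {T} U (h : T -> Cplx) z : is_ultra U -> islim U h z -> ulim U h = z.
Proof.
  intros HU Hz. eapply islim_unique; eauto. unfold ulim. apply epsilon_spec. eauto.
Qed.

Lemma islim_bound {T} U (h : T -> Cplx) z M :
  is_ultra U -> islim U h z -> (forall x, Cnorm (h x) <= M) -> Cnorm z <= M.
Proof.
  intros HU Hz HM. apply Rnot_lt_le. intros Hlt.
  destruct (ultra_ne U _ HU (Hz (Cnorm z - M) ltac:(lra))) as [x Hx].
  pose proof (Cnorm_tri z (h x) Defs.C0). pose proof (HM x).
  assert (E1 : Csub z Defs.C0 = z) by (destruct z; unfold Csub, Defs.C0; simpl; f_equal; ring).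
  assert (E2 : Csub (h x) Defs.C0 = h x) by (destruct (h x); unfold Csub, Defs.C0; simpl; f_equal; ring).
  rewrite E1, E2, Cnorm_sym in H. lra.
Qed.

Lemma islim_const {T} U (c : Cplx) : is_filt U -> islim U (fun _ : T => c) c.
Proof.
  intros (T1 & T2 & T3) d Hd. apply (T2 _ _ T1). intros. rewrite Cnorm_self. lra.
Qed.

Lemma islim_add {T} U (h g : T -> Cplx) a b : is_filt U -> islim U h a -> islim U g b ->
  islim U (fun x => Cadd (h x) (g x)) (Cadd a b).
Proof.
  intros (T1 & T2 & T3) Ha Hb d Hd.
  apply (T2 _ _ (T3 _ _ (Ha (d/2) ltac:(lra)) (Hb (d/2) ltac:(lra)))).
  intros x [H1 H2].
  assert (E : Csub (Cadd (h x) (g x)) (Cadd a b) = Cadd (Csub (h x) a) (Csub (g x) b)).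
  { destruct (h x), (g x), a, b; unfold Csub, Cadd; simpl; f_equal; ring. }
  rewrite E. eapply Rle_lt_trans; [apply Cnorm_add|]. lra.
Qed.

Lemma islim_scal {T} U (h : T -> Cplx) c a : is_filt U -> islim U h a ->
  islim U (fun x => Cmul c (h x)) (Cmul c a).
Proof.
  intros (T1 & T2 & T3) Ha d Hd.
  pose proof (Cnorm_ge0 c).
  apply (T2 _ _ (Ha (d / (Cnorm c + 1)) ltac:(apply Rdiv_lt_0_compat; lra))).
  intros x Hx.
  assert (E : Csub (Cmul c (h x)) (Cmul c a) = Cmul c (Csub (h x) a)).
  { destruct (h x), c, a; unfold Csub, Cmul; simpl; f_equal; ring. }
  rewrite E, Cnorm_mul.
  apply Rmult_lt_compat_r with (r := Cnorm c + 1) in Hx; [|lra].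
  unfold Rdiv in Hx. rewrite Rmult_assoc, Rinv_l in Hx by lra.
  pose proof (Cnorm_ge0 (Csub (h x) a)). nra.
Qed.

Lemma islim_mul {T} U (h g : T -> Cplx) a b : is_filt U -> islim U h a -> islim U g b ->
  islim U (fun x => Cmul (h x) (g x)) (Cmul a b).
Proof.
  intros (T1 & T2 & T3) Ha Hb d Hd.
  pose proof (Cnorm_ge0 a). pose proof (Cnorm_ge0 b).
  set (K := Cnorm a + Cnorm b + 1).
  set (e := Rmin 1 (d / K)).
  assert (HK : 0 < K) by (unfold K; lra).
  assert (He : 0 < e) by (unfold e; apply Rmin_pos; [lra|apply Rdiv_lt_0_compat; lra]).
  assert (He1 : e <= 1) by apply Rmin_l.
  assert (HeK : e * K <= d).
  { unfold e. assert (Rmin 1 (d / K) <= d / K) by apply Rmin_r.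
    apply Rmult_le_compat_r with (r := K) in H1; [|lra].
    unfold Rdiv in H1. rewrite Rmult_assoc, Rinv_l in H1 by lra. lra. }
  apply (T2 _ _ (T3 _ _ (Ha e He) (Hb e He))).
  intros x [H1 H2].
  assert (E : Csub (Cmul (h x) (g x)) (Cmul a b) =
     Cadd (Cadd (Cmul (Csub (h x) a) (Csub (g x) b)) (Cmul a (Csub (g x) b))) (Cmul (Csub (h x) a) b)).
  { destruct (h x), (g x), a, b; unfold Csub, Cmul, Cadd; simpl; f_equal; ring. }
  rewrite E.
  eapply Rle_lt_trans; [apply Cnorm_add|].
  eapply Rle_lt_trans; [apply Rplus_le_compat_r; apply Cnorm_add|].
  rewrite !Cnorm_mul.
  pose proof (Cnorm_ge0 (Csub (h x) a)). pose proof (Cnorm_ge0 (Csub (g x) b)).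
  unfold K in HeK. nra.
Qed.

Definition Cconj' (z : Cplx) : Cplx := (fst z, - snd z).

Lemma islim_conj {T} U (h : T -> Cplx) a : is_filt U -> islim U h a ->
  islim U (fun x => Cconj' (h x)) (Cconj' a).
Proof.
  intros (T1 & T2 & T3) Ha d Hd. apply (T2 _ _ (Ha d Hd)). intros x Hx.
  replace (Cnorm (Csub (Cconj' (h x)) (Cconj' a))) with (Cnorm (Csub (h x) a)); auto.
  unfold Cnorm, Csub, Cconj'; simpl. f_equal. ring.
Qed.

Section Main.
Variable S : HSTSemigroup.

Definition one : S -> Cplx := fun _ => Defs.C1.
Definition negC (z : Cplx) : Cplx := (- fst z, - snd z).

Definition nbhd (x : S) (A : S -> Prop) : Prop :=
  exists V, is_open S V /\ V x /\ forall y, V y -> A y.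

Lemma nbhd_filt x : is_filt (nbhd x).
Proof.
  repeat split.
  - exists (fun _ => True). repeat split; auto. apply open_full.
  - intros A B [V [HV [Vx HVA]]] HAB. exists V. repeat split; auto.
  - intros A B [V [HV [Vx HVA]]] [W [HW [Wx HWB]]]. exists (fun y => V y /\ W y).
    repeat split; auto. apply open_inter; auto.
    apply HVA; tauto. apply HWB; tauto.
Qed.

Lemma cont_islim f : continuous_fun S f <-> forall x, islim (nbhd x) f (f x).
Proof. unfold continuous_fun, islim, nbhd. split; intros H; exact H. Qed.

Lemma CB_const c : CB S (fun _ => c).
Proof.
  split.
  - apply cont_islim. intros x. apply (islim_const (nbhd x) c (nbhd_filt x)).
  - exists (Cnorm c). intros; lra.
Qed.

Lemma CB_bound f : CB S f -> exists M, 0 <= M /\ forall x, Cnorm (f x) <= M.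
Proof.
  intros [_ [M HM]]. exists (Rabs M). split; [apply Rabs_pos|].
  intros x. eapply Rle_trans; [apply HM|apply Rle_abs].
Qed.

Lemma CB_add f g : CB S f -> CB S g -> CB S (fadd S f g).
Proof.
  intros Hf Hg. split.
  - apply cont_islim. intros x. apply (islim_add (nbhd x)); [apply nbhd_filt|apply cont_islim; apply Hf|apply cont_islim; apply Hg].
  - destruct (CB_bound f Hf) as [M1 [_ H1]]. destruct (CB_bound g Hg) as [M2 [_ H2]].
    exists (M1 + M2). intros x. unfold fadd. eapply Rle_trans; [apply Cnorm_add|].
    pose proof (H1 x); pose proof (H2 x); lra.
Qed.

Lemma CB_mul f g : CB S f -> CB S g -> CB S (fmul S f g).
Proof.
  intros Hf Hg. split.
  - apply cont_islim. intros x. apply (islim_mul (nbhd x)); [apply nbhd_filt|apply cont_islim; apply Hf|apply cont_islim; apply Hg].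
  - destruct (CB_bound f Hf) as [M1 [P1 H1]]. destruct (CB_bound g Hg) as [M2 [P2 H2]].
    exists (M1 * M2). intros x. unfold fmul. rewrite Cnorm_mul.
    apply Rmult_le_compat; auto; apply Cnorm_ge0.
Qed.

Lemma CB_scal c f : CB S f -> CB S (fscal S c f).
Proof.
  intros Hf. split.
  - apply cont_islim. intros x. apply (islim_scal (nbhd x)); [apply nbhd_filt|apply cont_islim; apply Hf].
  - destruct (CB_bound f Hf) as [M1 [P1 H1]].
    exists (Cnorm c * M1). intros x. unfold fscal. rewrite Cnorm_mul.
    apply Rmult_le_compat_l; auto; apply Cnorm_ge0.
Qed.

Lemma CB_conj f : CB S f -> CB S (fun x => Cconj' (f x)).
Proof.
  intros Hf. split.
  - apply cont_islim. intros x. apply (islim_conj (nbhd x)); [apply nbhd_filt|apply cont_islim; apply Hf].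
  - destruct (CB_bound f Hf) as [M1 [P1 H1]]. exists M1. intros x.
    replace (Cnorm (Cconj' (f x))) with (Cnorm (f x)); auto.
    unfold Cnorm, Cconj'; simpl. f_equal; ring.
Qed.

Lemma Lshift_comp s t f : Lshift S t (Lshift S s f) = Lshift S (smul S s t) f.
Proof. apply functional_extensionality. intros x. unfold Lshift. rewrite smul_assoc. reflexivity. Qed.

Lemma CB_Lshift s f : CB S f -> CB S (Lshift S s f).
Proof.
  intros [Hc [M HM]]. split.
  - intros x eps He. destruct (Hc (smul S s x) eps He) as [V [HV [Vx HVy]]].
    exists (fun y => V (smul S s y)). repeat split; auto.
    + apply left_cont; auto.
    + intros y Hy. apply HVy; auto.
  - exists M. intros; apply HM.
Qed.

Lemma Lmc_Lshift s f : Lmc S f -> Lmc S (Lshift S s f).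
Proof.
  intros [Hf HT]. split; [apply CB_Lshift; auto|].
  intros rho Hr.
  replace (Tmu S rho (Lshift S s f)) with (Lshift S s (Tmu S rho f)).
  - apply CB_Lshift; auto.
  - apply functional_extensionality. intros t. unfold Tmu, Lshift at 1.
    rewrite Lshift_comp. reflexivity.
Qed.

Lemma CB_one : CB S one.
Proof. apply CB_const. Qed.

Lemma beta_one rho : betaS S rho -> rho one = Defs.C1.
Proof.
  intros (Ha & Hs & Hm & [f [Hf Hnz]]).
  apply (Cmul_cancel (rho f)); auto.
  rewrite <- Hm; auto using CB_one.
  f_equal. apply functional_extensionality; intros x. unfold fmul, one.
  destruct (f x); unfold Cmul, Defs.C1; simpl; f_equal; ring.
Qed.
End Main.

Section Key.
Variable S : HSTSemigroup.

Definition dfun (rho : (S -> Cplx) -> Cplx) (h : S -> Cplx) : S -> Cplx :=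
  fadd S h (fscal S (negC (rho h)) (one S)).
Definition sqf (rho : (S -> Cplx) -> Cplx) (h : S -> Cplx) : S -> Cplx :=
  fmul S (dfun rho h) (fun x => Cconj' (dfun rho h x)).
Definition zerof : S -> Cplx := fun _ => Defs.C0.
Definition Gf (rho : (S -> Cplx) -> Cplx) (l : list (S -> Cplx)) : S -> Cplx :=
  fold_right (fun h acc => fadd S (sqf rho h) acc) zerof l.

Lemma Gf_props rho l : betaS S rho -> (forall h, In h l -> CB S h) ->
  CB S (Gf rho l) /\ rho (Gf rho l) = Defs.C0 /\
  forall x, snd (Gf rho l x) = 0 /\ 0 <= fst (Gf rho l x) /\
     forall h, In h l -> Cnorm (Csub (h x) (rho h)) * Cnorm (Csub (h x) (rho h)) <= fst (Gf rho l x).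
Proof.
  intros Hb. pose proof (beta_one S rho Hb) as H1.
  destruct Hb as (Ha & Hs & Hm & _).
  induction l as [|h l IH]; intros Hl.
  - change (Gf rho nil) with zerof. assert (Ez : zerof = fscal S Defs.C0 (one S)).
    { apply functional_extensionality; intros x. unfold zerof, fscal, one, Cmul, Defs.C0, Defs.C1; simpl. f_equal; ring. }
    split; [|split; [|intros x; split; [|split]]].
    + rewrite Ez. apply CB_scal, CB_one.
    + rewrite Ez, Hs, H1 by apply CB_one. unfold Cmul, Defs.C0, Defs.C1; simpl; f_equal; ring.
    + unfold zerof, Defs.C0. simpl. lra.
    + unfold zerof, Defs.C0. simpl. lra.
    + intros h' [].
  - destruct IH as (IH1 & IH2 & IH3). { intros h' H'. apply Hl. right; auto. }
    assert (Hh : CB S h) by (apply Hl; left; auto).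
    assert (Hd : CB S (dfun rho h)) by (apply CB_add; auto; apply CB_scal, CB_one).
    assert (Hsq : CB S (sqf rho h)) by (apply CB_mul; auto; apply CB_conj; auto).
    assert (Ed : rho (dfun rho h) = Defs.C0).
    { unfold dfun. rewrite Ha, Hs, H1; auto using CB_one; [|apply CB_scal, CB_one].
      destruct (rho h). unfold negC, Cadd, Cmul, Defs.C1, Defs.C0; simpl; f_equal; ring. }
    assert (Ex : forall x, dfun rho h x = Csub (h x) (rho h)).
    { intros x. unfold dfun, fadd, fscal, one. destruct (h x), (rho h).
      unfold negC, Cadd, Cmul, Csub, Defs.C1; simpl; f_equal; ring. }
    change (Gf rho (h :: l)) with (fadd S (sqf rho h) (Gf rho l)).
    split; [|split; [|intros x; split; [|split]]].
    + apply CB_add; auto.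
    + rewrite Ha; auto. unfold sqf. rewrite Hm; auto; [|apply CB_conj; auto].
      rewrite Ed, IH2. unfold Cadd, Cmul, Defs.C0; simpl; f_equal; ring.
    + unfold fadd, sqf, fmul. rewrite Ex. destruct (IH3 x) as (A1 & _).
      destruct (Csub (h x) (rho h)). unfold Cadd, Cmul, Cconj'; simpl. rewrite A1. ring.
    + unfold fadd, sqf, fmul. rewrite Ex. destruct (IH3 x) as (_ & A2 & _).
      destruct (Csub (h x) (rho h)). unfold Cadd, Cmul, Cconj'; simpl. nra.
    + intros h' Hin. destruct (IH3 x) as (_ & A2 & A3).
      unfold fadd, sqf, fmul. rewrite Ex.
      assert (Eq : forall w, Cnorm w * Cnorm w = fst w * fst w + snd w * snd w).
      { intros w. unfold Cnorm. apply sqrt_sqrt. nra. }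
      assert (0 <= fst (Cmul (Csub (h x) (rho h)) (Cconj' (Csub (h x) (rho h))))).
      { destruct (Csub (h x) (rho h)). unfold Cmul, Cconj'; simpl. nra. }
      destruct Hin as [<-|Hin].
      * rewrite Eq. destruct (Csub (h x) (rho h)). unfold Cadd, Cmul, Cconj' in *; simpl in *. nra.
      * pose proof (A3 h' Hin). unfold Cadd; simpl.
        set (a := fst (h x) - fst (rho h)). set (b := snd (h x) - snd (rho h)).
        assert (0 <= a * a - b * - b) by nra. lra.
Qed.

Lemma key_lemma rho l d : betaS S rho -> (forall h, In h l -> CB S h) -> 0 < d ->
  exists x, forall h, In h l -> Cnorm (Csub (rho h) (h x)) < d.
Proof.
  intros Hb Hl Hd. apply NNPP. intros N.
  assert (H : forall x, exists h, In h l /\ d <= Cnorm (Csub (rho h) (h x))).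
  { intros x. apply NNPP. intros N2. apply N. exists x. intros h Hh.
    apply Rnot_le_lt. intros Hle. apply N2. eauto. }
  destruct (Gf_props rho l Hb Hl) as (G1 & G2 & G3).
  set (G := Gf rho l) in *.
  set (q := d * d).
  assert (Hq : 0 < q) by (unfold q; nra).
  assert (Gq : forall x, q <= fst (G x)).
  { intros x. destruct (H x) as [h [Hin Hh]]. destruct (G3 x) as (_ & _ & A).
    pose proof (A h Hin). rewrite Cnorm_sym in Hh. unfold q. nra. }
  set (ig := fun x => (/ fst (G x), 0) : Cplx).
  assert (Cig : CB S ig).
  { split.
    - intros x eps He. destruct G1 as [Gc _].
      destruct (Gc x (eps * q * q)) as [V [HV [Vx HVy]]]. { apply Rmult_lt_0_compat; auto. nra. }
      exists V. repeat split; auto. intros y Vy. specialize (HVy y Vy).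
      pose proof (Gq x) as Gx. pose proof (Gq y) as Gy.
      destruct (G3 x) as (Sx & _). destruct (G3 y) as (Sy & _).
      unfold ig, Csub; simpl.
      replace (0 - 0) with 0 by ring. rewrite Cnorm_real.
      replace (Cnorm (Csub (G y) (G x))) with (Rabs (fst (G y) - fst (G x))) in HVy.
      2:{ destruct (G y), (G x). simpl in *. subst. unfold Csub; simpl. replace (0-0) with 0 by ring. rewrite Cnorm_real. auto. }
      set (py := fst (G y)) in *. set (px := fst (G x)) in *.
      replace (/ py - / px) with ((px - py) * / (px * py)) by (field; lra).
      rewrite Rabs_mult, Rabs_inv, (Rabs_right (px * py)) by nra.
      rewrite <- Rabs_Ropp in HVy. replace (- (py - px)) with (px - py) in HVy by ring.
      apply (Rmult_lt_reg_r (px * py)); [nra|].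
      rewrite Rmult_assoc, Rinv_l by nra. rewrite Rmult_1_r.
      assert (q * q <= px * py) by (apply Rmult_le_compat; lra).
      assert (eps * (q * q) <= eps * (px * py)) by (apply Rmult_le_compat_l; lra).
      rewrite Rmult_assoc in HVy. lra.
    - exists (/ q). intros x. unfold ig. rewrite Cnorm_real. pose proof (Gq x).
      rewrite Rabs_right by (apply Rle_ge, Rlt_le, Rinv_0_lt_compat; lra).
      apply Rinv_le_contravar; lra. }
  assert (E : fmul S G ig = one S).
  { apply functional_extensionality; intros x. unfold fmul, ig, one.
    pose proof (Gq x). destruct (G3 x) as (Sx & _). destruct (G x) as [p s]. simpl in *. subst s.
    unfold Cmul, Defs.C1; simpl. f_equal; field; lra. }
  pose proof (beta_one S rho Hb) as H1. destruct Hb as (Ha & Hs & Hm & _).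
  rewrite <- E, Hm, G2 in H1; auto.
  apply C1_neq_C0. rewrite <- H1. unfold Cmul, Defs.C0; simpl. f_equal; ring.
Qed.
End Key.

Definition prodU {T : Type} (m : T -> T -> T) (U' U : (T -> Prop) -> Prop) : (T -> Prop) -> Prop :=
  fun A => U' (fun a => U (fun t => A (m a t))).

Lemma prodU_ultra {T} (m : T -> T -> T) U' U : is_ultra U' -> is_ultra U -> is_ultra (prodU m U' U).
Proof.
  intros (A1&A2&A3&A4&A5) (B1&B2&B3&B4&B5). unfold prodU. split; [|split; [|split; [|split]]].
  - apply (A2 _ _ A1). intros; exact B1.
  - intros A B HA HAB. apply (A2 _ _ HA). intros a Ha. apply (B2 _ _ Ha). intros t; apply HAB.
  - intros A B HA HB. apply (A2 _ _ (A3 _ _ HA HB)). intros a [H1 H2]. apply B3; auto.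
  - intros H. apply A4. apply (A2 _ _ H). intros a Ha. apply B4. exact Ha.
  - intros A. destruct (A5 (fun a => U (fun t => A (m a t)))) as [H|H]; [left; auto|right].
    apply (A2 _ _ H). intros a Ha. destruct (B5 (fun t => A (m a t))) as [H'|H']; [contradiction|exact H'].
Qed.

Lemma prodU_lim {T} U' U (m : T -> T -> T) h M : is_ultra U' -> is_ultra U ->
  (forall x, Cnorm (h x) <= M) ->
  ulim U' (fun a => ulim U (fun t => h (m a t))) = ulim (prodU m U' U) h.
Proof.
  intros HU' HU HM.
  set (k := fun a => ulim U (fun t => h (m a t))).
  assert (Hk : forall a, islim U (fun t => h (m a t)) (k a)) by (intros; eapply ulim_spec; eauto).
  assert (Hkb : forall a, Cnorm (k a) <= M) by (intros a; eapply islim_bound; eauto).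
  assert (Hz := ulim_spec U' k M HU' Hkb).
  symmetry. apply ulim_eq; [apply prodU_ultra; auto|].
  intros d Hd. pose proof HU' as (A1&A2&A3&A4&A5). pose proof HU as (B1&B2&B3&B4&B5).
  assert (Hd2 : 0 < d/2) by lra.
  unfold prodU. apply (A2 _ _ (Hz (d/2) Hd2)). intros a Ha. apply (B2 _ _ (Hk a (d/2) Hd2)). intros t Ht.
  pose proof (Cnorm_tri (h (m a t)) (k a) (ulim U' k)). lra.
Qed.

Section Fin.
Variable S : HSTSemigroup.

Lemma ultra_of_approx (Q : (S -> Cplx) -> Prop) (phi : (S -> Cplx) -> Cplx) :
  (forall fs eps, 0 < eps -> (forall f, In f fs -> Q f) ->
     exists a, forall f, In f fs -> Cnorm (Csub (phi f) (f a)) < eps) ->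
  exists U, is_ultra U /\ forall h, Q h -> islim U h (phi h).
Proof.
  intros HA.
  set (P := fun A : S -> Prop => exists h d, Q h /\ 0 < d /\ A = (fun x => Cnorm (Csub (h x) (phi h)) < d)).
  assert (Hl : forall l, (forall A, In A l -> P A) -> exists fs eps, 0 < eps /\ (forall f, In f fs -> Q f) /\
     forall x, (forall f, In f fs -> Cnorm (Csub (phi f) (f x)) < eps) -> forall A, In A l -> A x).
  { induction l as [|A l IH]; intros HP.
    - exists nil, 1. split; [lra|split; [intros f []|intros x _ A []]].
    - destruct IH as [fs [e [He [Hfs Hx]]]]. { intros B HB; apply HP; right; auto. }
      destruct (HP A (or_introl eq_refl)) as [h [d [Qh [Hd EA]]]].
      exists (h :: fs), (Rmin e d). split; [apply Rmin_pos; auto|split].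
      + intros f [<-|Hf]; auto.
      + intros x Hall B [<-|HB].
        * rewrite EA. rewrite Cnorm_sym. eapply Rlt_le_trans; [apply Hall; left; auto|apply Rmin_r].
        * apply Hx; auto. intros f Hf. eapply Rlt_le_trans; [apply Hall; right; auto|apply Rmin_l]. }
  destruct (exists_ultra S P) as [U [HU HPU]].
  { intros l Hl'. destruct (Hl l Hl') as [fs [e [He [Hfs Hx]]]].
    destruct (HA fs e He Hfs) as [a Ha]. exists a. apply Hx; auto. }
  exists U. split; auto. intros h Qh d Hd. apply HPU. exists h, d. auto.
Qed.

Lemma ulim_betaS U : is_ultra U -> betaS S (ulim U).
Proof.
  intros HU. pose proof (ultra_filt U HU) as HF.
  assert (Hs : forall f, CB S f -> islim U f (ulim U f)).
  { intros f Hf. destruct (CB_bound S f Hf) as [M [_ HM]]. eapply ulim_spec; eauto. }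
  split; [|split; [|split]].
  - intros f g Hf Hg. apply ulim_eq; auto. unfold fadd. apply islim_add; auto.
  - intros c f Hf. apply ulim_eq; auto. unfold fscal. apply islim_scal; auto.
  - intros f g Hf Hg. apply ulim_eq; auto. unfold fmul. apply islim_mul; auto.
  - exists (one S). split; [apply CB_one|].
    rewrite (ulim_eq U (one S) Defs.C1 HU); [apply C1_neq_C0|]. apply islim_const; auto.
Qed.

Lemma Tnu_Lmc nu f :
  (forall fs eps, 0 < eps -> (forall g, In g fs -> Lmc S g) ->
     exists a, forall g, In g fs -> Cnorm (Csub (nu g) (g a)) < eps) ->
  Lmc S f -> Lmc S (Tmu S nu f).
Proof.
  intros HA Hf.
  destruct (ultra_of_approx (Lmc S) nu HA) as [U [HU HUl]].
  assert (Enu : forall g, Lmc S g -> nu g = ulim U g) by (intros g Hg; symmetry; apply ulim_eq; auto).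
  assert (ET : Tmu S nu f = Tmu S (ulim U) f).
  { apply functional_extensionality; intros t. unfold Tmu. apply Enu, Lmc_Lshift; auto. }
  pose proof (ulim_betaS U HU) as HbU.
  assert (CBT : CB S (Tmu S nu f)) by (rewrite ET; apply (proj2 Hf); auto).
  split; auto.
  intros rho Hrho.
  destruct (ultra_of_approx (CB S) rho) as [U' [HU' HU'l]].
  { intros fs eps He Hfs. apply key_lemma; auto. }
  set (W := prodU (smul S) U' U).
  assert (HW : is_ultra W) by (apply prodU_ultra; auto).
  replace (Tmu S rho (Tmu S nu f)) with (Tmu S (ulim W) f).
  { apply (proj2 Hf). apply ulim_betaS; auto. }
  apply functional_extensionality; intros s. unfold Tmu at 1 2.
  assert (CBs : CB S (Lshift S s (Tmu S nu f))) by (apply CB_Lshift; auto).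
  rewrite <- (ulim_eq U' _ _ HU' (HU'l _ CBs)).
  replace (Lshift S s (Tmu S nu f)) with (fun a => ulim U (fun t => Lshift S s f (smul S a t))).
  - destruct (CB_bound S (Lshift S s f)) as [M [_ HM]]. { apply CB_Lshift; apply (proj1 Hf). }
    symmetry. apply (prodU_lim U' U (smul S) (Lshift S s f) M); auto.
  - apply functional_extensionality; intros a.
    change (Lshift S s (Tmu S nu f) a) with (nu (Lshift S (smul S s a) f)).
    rewrite Enu by (apply Lmc_Lshift; auto).
    rewrite <- Lshift_comp. reflexivity.
Qed.
End Fin.

Lemma sep_lemma (G0 : HSTSemigroup) (x : nat -> G0) nu : Sstar G0 nu ->
  forall K, exists gs d, 0 < d /\ (forall g, In g gs -> Lmc G0 g) /\
    forall j, (j <= K)%nat -> exists g, In g gs /\ d <= Cnorm (Csub (nu g) (g (x j))).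
Proof.
  intros [_ Hsep].
  assert (Hj : forall j, exists g, Lmc G0 g /\ 0 < Cnorm (Csub (nu g) (g (x j)))).
  { intros j. specialize (Hsep (x j)). apply NNPP; intros N. apply Hsep. intros g Hg.
    apply NNPP; intros Neq. apply N. exists g. split; auto.
    destruct (Rle_lt_or_eq_dec 0 _ (Cnorm_ge0 (Csub (nu g) (g (x j))))) as [H|H]; auto.
    exfalso. apply Neq. apply Cnorm_zero_eq. auto. }
  induction K as [|K IH].
  - destruct (Hj 0%nat) as [g [Hg Hpos]]. exists (g :: nil), (Cnorm (Csub (nu g) (g (x 0%nat)))).
    split; auto. split.
    + intros g' [<-|[]]; auto.
    + intros j Hjle. assert (j = 0%nat) by lia. subst. exists g. split; [left; auto|lra].
  - destruct IH as [gs [d [Hd [Hgs Hcov]]]]. destruct (Hj (Datatypes.S K)) as [g [Hg Hpos]].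
    exists (g :: gs), (Rmin d (Cnorm (Csub (nu g) (g (x (Datatypes.S K)))))).
    split; [apply Rmin_pos; auto|split].
    + intros g' [<-|H]; auto.
    + intros j Hjle. destruct (Nat.eq_dec j (Datatypes.S K)) as [->|Hne].
      * exists g; split; [left; auto| apply Rmin_r].
      * destruct (Hcov j ltac:(lia)) as [g' [Hin Hle]]. exists g'. split; [right; auto|].
        eapply Rle_trans; [apply Rmin_l|auto].
Qed.

Theorem lemma4p4 (S : HSTSemigroup) (x y : nat -> S)
  (hx : unbounded_seq S x) (hy : unbounded_seq S y)
  (mu nu : (S -> Cplx) -> Cplx)
  (hmu : Sstar S mu) (hnu : Sstar S nu)
  (hnux : in_cl_eps S (seq_range S x) nu)
  (hmuy : in_cl_eps S (seq_range S y) mu) :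
  in_cl_eps S (fun z => exists k n, (k < n)%nat /\ z = smul S (y k) (x n))
    (lmc_prod S mu nu).
Proof.
  assert (HA : forall fs eps, 0 < eps -> (forall g, In g fs -> Lmc S g) ->
     exists a, forall g, In g fs -> Cnorm (Csub (nu g) (g a)) < eps).
  { intros fs eps He Hfs. destruct (hnux fs eps He Hfs) as [a [_ Ha]]. exists a; exact Ha. }
  intros fs eps He Hfs.
  destruct (hmuy (map (Tmu S nu) fs) (eps/2)) as [a [[k Hk] Ha]]; [lra| |].
  { intros g Hg. apply in_map_iff in Hg. destruct Hg as [f [<- Hf]]. apply Tnu_Lmc; auto. }
  subst a.
  destruct (sep_lemma S x nu hnu k) as [gs [d [Hd [Hgs Hcov]]]].
  destruct (hnux (map (Lshift S (y k)) fs ++ gs) (Rmin (eps/2) d)) as [a [[n Hn] Han]];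
    [apply Rmin_pos; lra| |].
  { intros g Hg. apply in_app_or in Hg. destruct Hg as [Hg|Hg]; auto.
    apply in_map_iff in Hg. destruct Hg as [f [<- Hf]]. apply Lmc_Lshift; auto. }
  subst a.
  assert (Hkn : (k < n)%nat).
  { destruct (Nat.lt_ge_cases k n) as [|Hle]; auto. exfalso.
    destruct (Hcov n Hle) as [g [Hin Hge]].
    assert (Cnorm (Csub (nu g) (evalS S (x n) g)) < Rmin (eps/2) d)
      by (apply Han; apply in_or_app; right; auto).
    unfold evalS in H. pose proof (Rmin_r (eps/2) d). lra. }
  exists (smul S (y k) (x n)). split; [exists k, n; auto|].
  intros f Hf.
  pose proof (Ha (Tmu S nu f) (in_map _ _ _ Hf)) as H1.
  pose proof (Han (Lshift S (y k) f) (in_or_app _ _ _ (or_introl (in_map _ _ _ Hf)))) as H2.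
  unfold evalS in *. unfold lmc_prod.
  pose proof (Cnorm_tri (mu (Tmu S nu f)) (Tmu S nu f (y k)) (f (smul S (y k) (x n)))).
  change (Tmu S nu f (y k)) with (nu (Lshift S (y k) f)) in *.
  change (Lshift S (y k) f (x n)) with (f (smul S (y k) (x n))) in H2.
  pose proof (Rmin_l (eps/2) d). lra.
Qed.
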